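(* Let $G$ be a finite group and $H\subset G$ a subgroup. Let $\xi$ be a pure state of a system carrying a projective unitary representation $U$ of $G$, which is a uniform state with symmetry $H$, i.e. $\chi_\xi(g)=1$ for $g\in H$ and $\chi_\xi(g)=0$ for $g\notin H$. Let $|\phi\rangle$ be any pure state of a system carrying a projective unitary representation $U'$ of $G$ with $H\subset\mathrm{Sym}_G(\phi)$. Then for every positive integer $M$ there exists a CPTP map $\Lambda$, covariant w.r.t. $U$ and $U'^{\otimes M}$, with $\Lambda(\xi)=\phi^{\otimes M}$.
   Context: $\chi_\xi(g)=\langle\xi|U(g)|\xi\rangle$; $\mathrm{Sym}_G(\phi)=\{g: U'(g)\phi U'(g)^\dagger=\phi\}$ with $\phi=|\phi\rangle\langle\phi|$. A projective unitary representation satisfies $U(g)U(g')=e^{i\omega(g,g')}U(gg')$. A CPTP map $\Lambda$ is covariant w.r.t. input representation $U$ and output representation $V$ if $V(g)\Lambda(X)V(g)^\dagger=\Lambda(U(g)XU(g)^\dagger)$ for all $g\in G$. *)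

(* Defs.v *)
(* Hilbert spaces are C^d with C an arbitrary numClosedFieldType
   (e.g. algC or R[i] for a real closed field R). *)
From HB Require Import structures.
From mathcomp Require Import all_boot all_order all_algebra all_fingroup.
From mathcomp Require Import mxtens.
Set Implicit Arguments. Unset Strict Implicit. Unset Printing Implicit Defensive.
Import Order.TTheory GRing.Theory Num.Theory.
Local Open Scope ring_scope.

Section QDefs.
Variable C : numClosedFieldType.

Definition adj {m n} (A : 'M[C]_(m, n)) : 'M[C]_(n, m) := (map_mx Num.conj A)^T.

(* pure states: unit vectors, and their density matrices |x><x| *)
Definition unit_vec {d} (x : 'cV[C]_d) : Prop := adj x *m x = 1.
Definition proj {d} (x : 'cV[C]_d) : 'M[C]_d := x *m adj x.

Definition unitary {d} (A : 'M[C]_d) : Prop := adj A *m A = 1%:M /\ A *m adj A = 1%:M.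

Definition proj_unitary_rep {gT : finGroupType} (G : {group gT}) {d}
    (U : gT -> 'M[C]_d) : Prop :=
  (forall g, g \in G -> unitary (U g)) /\
  (forall g g', g \in G -> g' \in G ->
     exists c : C, `|c| = 1 /\ U g *m U g' = c *: U (g * g')%g).

Definition chi {gT : finGroupType} {d} (U : gT -> 'M[C]_d) (xi : 'cV[C]_d) (g : gT) : C :=
  (adj xi *m U g *m xi) 0 0.

Definition SymG {gT : finGroupType} (G : {group gT}) {d} (U : gT -> 'M[C]_d)
    (phi : 'cV[C]_d) : {set gT} :=
  [set g in G | U g *m proj phi *m adj (U g) == proj phi].

Fixpoint pdim (d M : nat) : nat := if M is M'.+1 then (d * pdim d M')%N else 1%N.
Fixpoint tenspow {m n} (M : nat) (A : 'M[C]_(m, n)) : 'M[C]_(pdim m M, pdim n M) :=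
  if M is M'.+1 then A *t tenspow M' A else 1%:M.

(* positive semidefiniteness of a block matrix on C^k (x) C^m given by its
   k x k blocks B i j (each m x m): <v|B|v> >= 0 for every vector v *)
Definition psd_blocks {k m} (B : 'I_k -> 'I_k -> 'M[C]_m) : Prop :=
  forall v : 'I_k -> 'cV[C]_m,
    0 <= \sum_(i < k) \sum_(j < k) (adj (v i) *m B i j *m v j) 0 0.

Definition linear_map {m n} (L : 'M[C]_m -> 'M[C]_n) : Prop :=
  forall (a : C) (X Y : 'M[C]_m), L (a *: X + Y) = a *: L X + L Y.

(* complete positivity: id_k (x) L is positive for every ancilla dimension k *)
Definition completely_positive {m n} (L : 'M[C]_m -> 'M[C]_n) : Prop :=
  forall (k : nat) (B : 'I_k -> 'I_k -> 'M[C]_m),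
    psd_blocks B -> psd_blocks (fun i j => L (B i j)).

Definition trace_preserving {m n} (L : 'M[C]_m -> 'M[C]_n) : Prop :=
  forall X, \tr (L X) = \tr X.

Definition CPTP {m n} (L : 'M[C]_m -> 'M[C]_n) : Prop :=
  [/\ linear_map L, completely_positive L & trace_preserving L].

Definition covariant {gT : finGroupType} (G : {group gT}) {m n}
    (U : gT -> 'M[C]_m) (V : gT -> 'M[C]_n) (L : 'M[C]_m -> 'M[C]_n) : Prop :=
  forall g, g \in G -> forall X,
    V g *m L X *m adj (V g) = L (U g *m X *m adj (U g)).

End QDefs.

(* Main.v *)
Require Import Defs.
From HB Require Import structures.
From mathcomp Require Import all_boot all_order all_algebra all_fingroup.
From mathcomp Require Import mxtens ring.
Import Order.TTheory GRing.Theory Num.Theory.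
Local Open Scope ring_scope.
Set Implicit Arguments. Unset Strict Implicit. Unset Printing Implicit Defensive.

Section Gen.
Variable C : numClosedFieldType.

Lemma adjE m n (A : 'M[C]_(m,n)) i j : adj A i j = (A j i)^*.
Proof. by rewrite !mxE. Qed.
Lemma adjK m n (A : 'M[C]_(m,n)) : adj (adj A) = A.
Proof. by apply/matrixP=> i j; rewrite !adjE conjCK. Qed.
Lemma adjD m n (A B : 'M[C]_(m,n)) : adj (A + B) = adj A + adj B.
Proof. by apply/matrixP=> i j; rewrite !mxE rmorphD. Qed.
Lemma adjN m n (A : 'M[C]_(m,n)) : adj (- A) = - adj A.
Proof. by apply/matrixP=> i j; rewrite !mxE rmorphN. Qed.
Lemma adjB m n (A B : 'M[C]_(m,n)) : adj (A - B) = adj A - adj B.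
Proof. by rewrite adjD adjN. Qed.
Lemma adj0 m n : adj (0 : 'M[C]_(m,n)) = 0.
Proof. by apply/matrixP=> i j; rewrite !mxE rmorph0. Qed.
Lemma adjZ m n c (A : 'M[C]_(m,n)) : adj (c *: A) = c^* *: adj A.
Proof. by apply/matrixP=> i j; rewrite !mxE rmorphM. Qed.
Lemma adj1 n : adj (1%:M : 'M[C]_n) = 1%:M.
Proof. by apply/matrixP=> i j; rewrite !mxE rmorph_nat eq_sym. Qed.
Lemma adjM m n p (A : 'M[C]_(m,n)) (B : 'M[C]_(n,p)) : adj (A *m B) = adj B *m adj A.
Proof.
apply/matrixP=> i j; rewrite !mxE rmorph_sum; apply: eq_bigr=> k _.
by rewrite !mxE rmorphM mulrC.
Qed.
Lemma adj_sum (I : finType) (P : pred I) m n (F : I -> 'M[C]_(m,n)) :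
  adj (\sum_(i | P i) F i) = \sum_(i | P i) adj (F i).
Proof. exact: (big_morph _ (@adjD m n) (@adj0 m n)). Qed.
Lemma adj_tens m n p q (A : 'M[C]_(m,n)) (B : 'M[C]_(p,q)) :
  adj (A *t B) = adj A *t adj B.
Proof. by apply/matrixP=> i j; rewrite !mxE rmorphM. Qed.

Lemma tens11 m n : (1%:M : 'M[C]_m) *t (1%:M : 'M[C]_n) = 1%:M.
Proof.
apply/matrixP=> i j.
case: (mxtens_indexP i)=> i0 i1; case: (mxtens_indexP j)=> j0 j1.
rewrite tensmxE !mxE (can_eq (@mxtens_indexK m n)) xpair_eqE.
by case: (i0 == j0); case: (i1 == j1); rewrite /= ?mulr1 ?mulr0 ?mul0r.
Qed.
Lemma tensZl m n p q c (A : 'M[C]_(m,n)) (B : 'M[C]_(p,q)) :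
  (c *: A) *t B = c *: (A *t B).
Proof. by apply/matrixP=> i j; rewrite !mxE mulrA. Qed.
Lemma tensZr m n p q c (A : 'M[C]_(m,n)) (B : 'M[C]_(p,q)) :
  A *t (c *: B) = c *: (A *t B).
Proof. by apply/matrixP=> i j; rewrite !mxE mulrCA. Qed.

Lemma tenspow_mul M m n p (A : 'M[C]_(m,n)) (B : 'M[C]_(n,p)) :
  tenspow M (A *m B) = tenspow M A *m tenspow M B.
Proof. elim: M => [|M IH] /=; first by rewrite mul1mx. by rewrite IH tensmx_mul. Qed.
Lemma tenspowZ M m n c (A : 'M[C]_(m,n)) :
  tenspow M (c *: A) = c ^+ M *: tenspow M A.
Proof.
elim: M => [|M IH] /=; first by rewrite scale1r.
by rewrite IH tensZl tensZr scalerA exprS.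
Qed.
Lemma adj_tenspow M m n (A : 'M[C]_(m,n)) : adj (tenspow M A) = tenspow M (adj A).
Proof. elim: M => [|M IH] /=; first by rewrite adj1. by rewrite adj_tens IH. Qed.
Lemma tenspow1 M n : tenspow M (1%:M : 'M[C]_n) = 1%:M.
Proof. elim: M => [|M IH] //=. by rewrite IH tens11. Qed.
Lemma pdim1 M : pdim 1 M = 1%N.
Proof. by elim: M => //= M ->. Qed.
Lemma pdim_gt0 d M : (0 < d)%N -> (0 < pdim d M)%N.
Proof. by move=> hd; elim: M => //= M IH; rewrite muln_gt0 hd. Qed.

Definition sc m (a : 'cV[C]_m) (X : 'M[C]_m) : C := (adj a *m X *m a) 0 0.

Lemma sc_lin m (a : 'cV[C]_m) b X Y : sc a (b *: X + Y) = b * sc a X + sc a Y.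
Proof. by rewrite /sc mulmxDr mulmxDl -scalemxAr -scalemxAl !mxE. Qed.

Lemma sc_scale m (a : 'cV[C]_m) c X : sc (c *: a) X = (c^* * c) * sc a X.
Proof. by rewrite /sc adjZ -!scalemxAl -scalemxAr !mxE mulrA [_ * c]mulrC. Qed.

Lemma tr11 (A : 'M[C]_1) : \tr A = A 0 0.
Proof. by rewrite /mxtrace big_ord1. Qed.

Lemma tr_proj m (a : 'cV[C]_m) X : \tr (a *m adj a *m X) = sc a X.
Proof. by rewrite -mulmxA mxtrace_mulC tr11. Qed.


Lemma sc_scale2 m (a : 'cV[C]_m) c c' X :
  (adj (c *: a) *m X *m (c' *: a)) 0 0 = c^* * c' * sc a X.
Proof. by rewrite /sc adjZ -!scalemxAl -scalemxAr !mxE mulrA [_ * c']mulrC. Qed.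

Lemma CP_ext m n (L L' : 'M[C]_m -> 'M[C]_n) :
  (forall X, L X = L' X) -> completely_positive L' -> completely_positive L.
Proof.
move=> E hL k B hB v; have := hL k B hB v.
by under eq_bigr do under eq_bigr do rewrite -E.
Qed.

Lemma CP_add m n (L1 L2 : 'M[C]_m -> 'M[C]_n) :
  completely_positive L1 -> completely_positive L2 ->
  completely_positive (fun X => L1 X + L2 X).
Proof.
move=> h1 h2 k B hB v.
under eq_bigr do under eq_bigr do rewrite mulmxDr mulmxDl mxE.
under eq_bigr do rewrite big_split /=.
by rewrite big_split /= addr_ge0 //; [apply: h1| apply: h2].
Qed.

Lemma CP_scale m n (L : 'M[C]_m -> 'M[C]_n) c :
  0 <= c -> completely_positive L -> completely_positive (fun X => c *: L X).
Proof.
move=> hc h k B hB v.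
under eq_bigr do under eq_bigr do rewrite -scalemxAr -scalemxAl mxE.
under eq_bigr do rewrite -mulr_sumr.
by rewrite -mulr_sumr mulr_ge0 //; apply: h.
Qed.

Lemma CP_sum (I : finType) (P : pred I) m n (F : I -> 'M[C]_m -> 'M[C]_n) :
  (forall i, completely_positive (F i)) ->
  completely_positive (fun X => \sum_(i | P i) F i X).
Proof.
move=> h k B hB v.
under eq_bigr do under eq_bigr do rewrite mulmx_sumr mulmx_suml summxE.
under eq_bigr do rewrite exchange_big /=.
rewrite exchange_big /=; apply: sumr_ge0 => i _; exact: h.
Qed.

Lemma CP_block m n p (a : 'cV[C]_m) (Y : 'M[C]_(n,p)) :
  completely_positive (fun X => sc a X *: (Y *m adj Y)).
Proof.
move=> k B hB v.
have E : forall i j, (adj (v i) *m (sc a (B i j) *: (Y *m adj Y)) *m v j) 0 0 =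
  \sum_(l < p) (adj ((adj Y *m v i) l 0 *: a) *m B i j *m ((adj Y *m v j) l 0 *: a)) 0 0.
  move=> i j; rewrite -scalemxAr -scalemxAl mxE !mulmxA.
  rewrite -[adj (v i) *m Y *m adj Y *m v j]mulmxA mxE mulr_sumr; apply: eq_bigr => l _.
  rewrite sc_scale2 -[adj (v i) *m Y]adjK adjM adjK adjE.
  by rewrite mulrC.
under eq_bigr do under eq_bigr do rewrite E.
under eq_bigr do rewrite exchange_big /=.
rewrite exchange_big /=; apply: sumr_ge0 => l _; exact: hB.
Qed.


Lemma vec0 m (w : 'cV[C]_m) : (adj w *m w) 0 0 = 0 -> w = 0.
Proof.
rewrite mxE => h; apply/matrixP=> i j; rewrite [j]ord1 mxE.
have /psumr_eq0P h2 : forall k : 'I_m, true -> 0 <= adj w 0 k * w k 0.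
  by move=> k _; rewrite adjE -normCKC exprn_ge0.
have := h2 h i isT; rewrite adjE -normCKC => /eqP.
by rewrite sqrf_eq0 normr_eq0 => /eqP.
Qed.

Lemma mx11E (A B : 'M[C]_1) : (A *m B) 0 0 = A 0 0 * B 0 0.
Proof. by rewrite mxE big_ord1. Qed.

Lemma conj_proj n (A : 'M[C]_n) c (Phi : 'M[C]_n) :
  `|c| = 1 -> (c *: A) *m Phi *m adj (c *: A) = A *m Phi *m adj A.
Proof.
move=> hc; rewrite adjZ -!scalemxAl -scalemxAr scalerA -normCK hc expr1n.
by rewrite scale1r.
Qed.

Lemma entry_rowcol n p (A : 'M[C]_(n,p)) (N : 'M[C]_p) (r : 'I_n) :
  (A *m N *m adj A) r r = sc (col r (adj A)) N.
Proof.
rewrite /sc.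
have -> : adj (col r (adj A)) = row r A by apply/matrixP=> i j; rewrite !mxE conjCK.
rewrite -row_mul !mxE; apply: eq_bigr => j _; by rewrite !mxE.
Qed.

Section Rep.
Variables (gT : finGroupType) (G : {group gT}) (d : nat) (U : gT -> 'M[C]_d).
Hypothesis hU : proj_unitary_rep G U.

Lemma rep_adjmul k g : k \in G -> g \in G ->
  exists c : C, `|c| = 1 /\ adj (U k) *m U g = c *: U (k^-1 * g)%g.
Proof.
move=> hk hg; case: hU => hun hmul.
have [c [hc E]] := hmul k (k^-1 * g)%g hk (groupM (groupVr hk) hg).
rewrite mulKVg in E.
have c0 : c != 0 by rewrite -normr_eq0 hc oner_eq0.
exists c^-1; split; first by rewrite normfV hc invr1.
have : adj (U k) *m (U k *m U (k^-1 * g)%g) = adj (U k) *m (c *: U g) by rewrite E.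
rewrite mulmxA (hun k hk).1 mul1mx -scalemxAr => ->.
by rewrite scalerA mulVf // scale1r.
Qed.

Lemma rep_conj k g (Phi : 'M[C]_d) : k \in G -> g \in G ->
  U k *m (U g *m Phi *m adj (U g)) *m adj (U k) = U (k * g)%g *m Phi *m adj (U (k * g)%g).
Proof.
move=> hk hg; case: hU => hun hmul.
have [c [hc E]] := hmul k g hk hg.
by rewrite !mulmxA -(mulmxA _ (adj (U g))) -adjM E conj_proj.
Qed.

Lemma rep_sc k g (a : 'cV[C]_d) X : k \in G -> g \in G ->
  sc (U g *m a) (U k *m X *m adj (U k)) = sc (U (k^-1 * g)%g *m a) X.
Proof.
move=> hk hg; have [c [hc E]] := rep_adjmul hk hg.
have -> : sc (U g *m a) (U k *m X *m adj (U k)) = sc (adj (U k) *m (U g *m a)) X.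
  by rewrite /sc !adjM adjK !mulmxA.
by rewrite mulmxA E -scalemxAl sc_scale -normCKC hc expr1n mul1r.
Qed.

Lemma rep_tr k X : k \in G -> \tr (U k *m X *m adj (U k)) = \tr X.
Proof.
move=> hk; case: hU => hun _.
by rewrite mxtrace_mulC mulmxA (hun k hk).1 mul1mx.
Qed.

Lemma rep_tenspow M : proj_unitary_rep G (fun g => tenspow M (U g)).
Proof.
case: hU => hun hmul; split.
  move=> g hg; rewrite /unitary adj_tenspow -!tenspow_mul.
  by rewrite (hun g hg).1 (hun g hg).2 !tenspow1.
move=> g g' hg hg'; have [c [hc E]] := hmul g g' hg hg'.
exists (c ^+ M); split; first by rewrite normrX hc expr1n.
by rewrite -tenspow_mul E tenspowZ.
Qed.

End Rep.

Section Main.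
Variables (gT : finGroupType) (G H : {group gT}) (d d' : nat).
Variables (U : gT -> 'M[C]_d) (U' : gT -> 'M[C]_d') (xi : 'cV[C]_d) (phi : 'cV[C]_d').
Hypotheses (sHG : H \subset G) (hU : proj_unitary_rep G U) (hxi : unit_vec xi).
Hypothesis hchi : forall g, g \in G -> chi U xi g = (if g \in H then 1 else 0).
Hypotheses (hU' : proj_unitary_rep G U') (hphi : unit_vec phi) (hsym : H \subset SymG G U' phi).
Variable M : nat.

Lemma inHG h : h \in H -> h \in G.
Proof. exact: (subsetP sHG). Qed.

Lemma fixH h : h \in H -> U h *m xi = xi.
Proof.
move=> hH; have hG := inHG hH; case: hU => hun _.
apply/eqP; rewrite -subr_eq0; apply/eqP; apply: vec0.
have c1 : adj xi *m (U h *m xi) = 1.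
  by rewrite mulmxA [LHS]mx11_scalar -/(chi U xi h) hchi // hH.
have e1 : adj (U h *m xi) *m (U h *m xi) = 1.
  by rewrite adjM -mulmxA (mulmxA (adj (U h))) (hun h hG).1 mul1mx hxi.
have e3 : adj (U h *m xi) *m xi = 1.
  by have := congr1 (@adj C _ _) c1; rewrite adjM adjK adj1.
rewrite adjB mulmxBl !mulmxBr e1 e3 c1 hxi !subrr.
by rewrite mxE.
Qed.

Lemma sumH (V : nmodType) (F : gT -> V) :
  \sum_(g in G) (if g \in H then F g else 0) = \sum_(g in H) F g.
Proof.
rewrite -big_mkcondr; apply: eq_bigl => g.
by apply/andP/idP=> [[] //|hg]; split=> //; exact: inHG.
Qed.

Lemma cardH_neq0 : (#|H|%:R : C) != 0.
Proof. by rewrite pnatr_eq0 -lt0n cardG_gt0. Qed.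

Definition cH : C := (#|H|%:R)^-1.
Definition xg g := U g *m xi.
Definition S := \sum_(g in G) xg g *m adj (xg g).
Definition P := cH *: S.
Definition Q := 1%:M - P.

Lemma key g g' : g \in G -> g' \in G ->
  xg g *m adj (xg g) *m (xg g' *m adj (xg g')) =
  ((g^-1 * g')%g \in H)%:R *: (xg g' *m adj (xg g')).
Proof.
move=> hg hg'; have [c [hc E]] := rep_adjmul hU hg hg'.
have hh : (g^-1 * g')%g \in G by rewrite groupM ?groupV.
have E2 : adj (xg g) *m xg g' = (c * ((g^-1 * g')%g \in H)%:R)%:M.
  rewrite /xg adjM -mulmxA (mulmxA (adj (U g))) E -scalemxAl -scalemxAr.
  rewrite mulmxA [adj xi *m _ *m xi]mx11_scalar -/(chi U xi _) hchi //.
  by case: ifP => _; rewrite -scale_scalar_mx.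
rewrite mulmxA -(mulmxA (xg g)) E2 mul_mx_scalar.
case hH: ((g^-1 * g')%g \in H); last by rewrite mulr0 !scale0r mul0mx.
rewrite /= mulr1 scale1r scalemxAl; congr (_ *m _).
case: hU => hun _.
rewrite /xg -[U g' *m xi]mul1mx -(hun g hg).2 -mulmxA (mulmxA (adj (U g))) E.
have -> : c *: U (g^-1 * g')%g *m xi = c *: (U (g^-1 * g')%g *m xi) by rewrite scalemxAl.
rewrite (fixH hH); apply/matrixP => i j; rewrite !mxE; apply: eq_bigr => k _; by rewrite !mxE -mulrA mulrCA.
Qed.

Lemma count_H g' : g' \in G -> \sum_(g in G) (((g^-1 * g')%g \in H)%:R : C) = #|H|%:R.
Proof.
move=> hg'; rewrite (reindex_inj (mulgI g')) /=.
rewrite (eq_bigl (fun g => g \in G)); last by move=> g; rewrite groupMl.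
have -> : \sum_(g in G) (((g' * g)^-1 * g')%g \in H)%:R = \sum_(g in G) (if g \in H then (1 : C) else 0).
  apply: eq_bigr => g _; rewrite invMg -mulgA mulVg mulg1 groupV.
  by case: (g \in H).
by rewrite sumH sumr_const.
Qed.

Lemma SS : S *m S = #|H|%:R *: S.
Proof.
rewrite {1}/S mulmx_suml.
under eq_bigr => g hg do rewrite /S mulmx_sumr.
under eq_bigr => g hg do under eq_bigr => g' hg' do rewrite key //.
rewrite exchange_big /= /S scaler_sumr; apply: eq_bigr => g' hg'.
by rewrite -scaler_suml count_H.
Qed.

Lemma PP : P *m P = P.
Proof.
rewrite /P -scalemxAl -scalemxAr SS !scalerA /cH -mulrA mulVf ?mulr1 //.
exact: cardH_neq0.
Qed.

Lemma adjP : adj P = P.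
Proof.
rewrite /P adjZ /S adj_sum /cH fmorphV rmorph_nat; congr (_ *: _).
by apply: eq_bigr => g _; rewrite adjM adjK.
Qed.

Lemma QQ : adj Q *m Q = Q.
Proof.
rewrite /Q adjB adj1 adjP mulmxBl mul1mx mulmxBr mulmx1 PP.
by rewrite subrr subr0.
Qed.

Lemma trP X : \tr (P *m X) = cH * \sum_(g in G) sc (xg g) X.
Proof.
rewrite /P /S -scalemxAl mxtraceZ mulmx_suml raddf_sum; congr (_ * _).
by apply: eq_bigr => g _; rewrite -tr_proj.
Qed.

Lemma trQ X : \tr X - cH * \sum_(g in G) sc (xg g) X =
  \sum_(r < d) sc (col r (adj Q)) X.
Proof.
have E : \tr (Q *m X) = \tr X - \tr (P *m X) by rewrite /Q mulmxBl mul1mx raddfB.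
rewrite -trP -E -[in LHS]QQ -mulmxA mxtrace_mulC.
by rewrite /mxtrace; apply: eq_bigr => r _; rewrite entry_rowcol.
Qed.


Definition Dn := pdim d' M.
Definition T := tenspow M phi.
Definition Phi := tenspow M (proj phi).
Definition V g := tenspow M (U' g).
Definition rho g := V g *m Phi *m adj (V g).
Definition L (X : 'M[C]_d) : 'M[C]_Dn :=
  \sum_(g in G) (cH * sc (xg g) X) *: rho g +
  ((Dn%:R)^-1 * (\tr X - cH * \sum_(g in G) sc (xg g) X)) *: 1%:M.

Lemma d'_gt0 : (0 < d')%N.
Proof.
case: (posnP d') => // d0.
have := congr1 (fun A : 'M[C]_1 => A 0 0) hphi; rewrite /= mxE.
rewrite big1; last by move=> i _; have := ltn_ord i; rewrite {2}d0.
by rewrite mxE /= => /eqP; rewrite eq_sym oner_eq0.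
Qed.

Lemma Dn_neq0 : (Dn%:R : C) != 0.
Proof. by rewrite pnatr_eq0 -lt0n pdim_gt0 // d'_gt0. Qed.

Lemma PhiT : Phi = T *m adj T.
Proof. by rewrite /Phi /T /proj tenspow_mul adj_tenspow. Qed.

Lemma trPhi : \tr Phi = 1.
Proof.
rewrite PhiT mxtrace_mulC /T adj_tenspow -tenspow_mul hphi.
by rewrite (tenspow1 M 1) mxtrace1 pdim1.
Qed.

Lemma hV : proj_unitary_rep G V.
Proof. exact: rep_tenspow. Qed.

Lemma tr_rho g : g \in G -> \tr (rho g) = 1.
Proof. by move=> hg; rewrite /rho (rep_tr hV) // trPhi. Qed.

Lemma rho_cov k g : k \in G -> g \in G -> V k *m rho g *m adj (V k) = rho (k * g)%g.
Proof. by move=> hk hg; rewrite /rho (rep_conj hV). Qed.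

Lemma rho_H h : h \in H -> rho h = Phi.
Proof.
move=> hH; have := subsetP hsym h hH; rewrite inE => /andP[_ /eqP E].
by rewrite /rho /V /Phi adj_tenspow -!tenspow_mul E.
Qed.


Lemma L_lin : linear_map L.
Proof.
move=> a X Y; rewrite /L.
have E1 : \sum_(g in G) sc (xg g) (a *: X + Y) =
    a * \sum_(g in G) sc (xg g) X + \sum_(g in G) sc (xg g) Y.
  by rewrite mulr_sumr -big_split /=; apply: eq_bigr => g _; rewrite sc_lin.
have E2 : \sum_(g in G) (cH * sc (xg g) (a *: X + Y)) *: rho g =
   a *: \sum_(g in G) (cH * sc (xg g) X) *: rho g + \sum_(g in G) (cH * sc (xg g) Y) *: rho g.
  rewrite scaler_sumr -big_split /=; apply: eq_bigr => g _.
  by rewrite sc_lin mulrDr scalerDl scalerA mulrCA.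
rewrite E1 E2 mxtraceD mxtraceZ scalerDr scalerA addrACA -scalerDl.
congr (_ + (_ *: _)).
ring.
Qed.

Lemma L_TP : trace_preserving L.
Proof.
move=> X; rewrite /L mxtraceD raddf_sum /= mxtraceZ mxtrace1.
rewrite -/Dn mulrAC mulVf ?Dn_neq0 // mul1r.
rewrite (eq_bigr (fun g => cH * sc (xg g) X)); last first.
  by move=> g hg; rewrite mxtraceZ tr_rho // mulr1.
by rewrite -mulr_sumr addrC subrK.
Qed.


Lemma reindexG (W : nmodType) (F : gT -> W) k : k \in G ->
  \sum_(g in G) F g = \sum_(g in G) F (k * g)%g.
Proof.
move=> hk; rewrite (reindex_inj (mulgI k)) /=.
by apply: eq_bigl => g; rewrite groupMl.
Qed.

Lemma L_cov : covariant G U V L.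
Proof.
move=> k hk X.
have A1 : \sum_(g in G) (cH * sc (xg g) (U k *m X *m adj (U k))) *: rho g =
          \sum_(g in G) (cH * sc (xg g) X) *: rho (k * g)%g.
  rewrite (reindexG _ hk); apply: eq_bigr => g hg.
  by rewrite /xg (rep_sc hU) ?groupM // mulKg.
have A2 : \sum_(g in G) sc (xg g) (U k *m X *m adj (U k)) = \sum_(g in G) sc (xg g) X.
  rewrite (reindexG _ hk); apply: eq_bigr => g hg.
  by rewrite /xg (rep_sc hU) ?groupM // mulKg.
have A3 : V k *m (\sum_(g in G) (cH * sc (xg g) X) *: rho g) *m adj (V k) =
          \sum_(g in G) (cH * sc (xg g) X) *: rho (k * g)%g.
  rewrite mulmx_sumr mulmx_suml; apply: eq_bigr => g hg.
  by rewrite -scalemxAr -scalemxAl rho_cov.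
have A4 : forall y : C, V k *m (y *: 1%:M) *m adj (V k) = y *: 1%:M.
  move=> y; case: hV => hun _.
  by rewrite -scalemxAr -scalemxAl mulmx1 (hun k hk).2.
by rewrite /L mulmxDr mulmxDl A3 A4 A1 A2 (rep_tr hU).
Qed.


Lemma sc_xi g : g \in G -> sc (xg g) (proj xi) = if g \in H then 1 else 0.
Proof.
move=> hg; rewrite /sc /proj /xg.
have e2 : adj (U g *m xi) *m (xi *m adj xi) *m (U g *m xi) =
  (adj (U g *m xi) *m xi) *m (adj xi *m (U g *m xi)) by rewrite !mulmxA.
rewrite e2 mx11E.
have e : adj (U g *m xi) *m xi = adj (adj xi *m (U g *m xi)) by rewrite [RHS]adjM adjK.
rewrite e adjE mulmxA -/(chi U xi g) hchi //.
by case: (g \in H); rewrite ?rmorph1 ?mulr1 ?mulr0.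
Qed.

Lemma cH_card : cH * #|H|%:R = 1.
Proof. by rewrite mulVf // cardH_neq0. Qed.

Lemma L_xi : L (proj xi) = Phi.
Proof.
rewrite /L.
have E1 : \sum_(g in G) sc (xg g) (proj xi) = #|H|%:R.
  rewrite (eq_bigr (fun g => if g \in H then 1 else 0)); last by move=> g hg; rewrite sc_xi.
  by rewrite sumH sumr_const.
have E2 : \sum_(g in G) (cH * sc (xg g) (proj xi)) *: rho g = Phi.
  rewrite (eq_bigr (fun g => if g \in H then cH *: Phi else 0)); last first.
    move=> g hg; rewrite sc_xi //; case hH: (g \in H).
      by rewrite mulr1 rho_H.
    by rewrite mulr0 scale0r.
  by rewrite sumH sumr_const scalerMnl -mulr_natr cH_card scale1r.
have E3 : \tr (proj xi) = 1.
  by rewrite /proj mxtrace_mulC hxi tr11 mxE.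
by rewrite E1 E2 E3 cH_card subrr mulr0 scale0r addr0.
Qed.


Lemma L_CP : completely_positive L.
Proof.
apply: (@CP_ext _ _ L (fun X =>
  \sum_(g in G) cH *: (sc (xg g) X *: ((V g *m T) *m adj (V g *m T))) +
  (Dn%:R)^-1 *: \sum_(r < d) (sc (col r (adj Q)) X *: (1%:M *m adj (1%:M : 'M[C]_Dn))))).
  move=> X; rewrite /L; congr (_ + _).
    apply: eq_bigr => g hg; rewrite scalerA; congr (_ *: _).
    by rewrite /rho PhiT adjM !mulmxA.
  rewrite trQ adj1 mul1mx -scaler_suml scalerA //.
apply: CP_add.
  apply: CP_sum => g; apply: CP_scale; first by rewrite invr_ge0 ler0n.
  exact: CP_block.
apply: CP_scale; first by rewrite invr_ge0 ler0n.
apply: CP_sum => r; exact: CP_block.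
Qed.

End Main.
End Gen.

Theorem mainTheorem7 (C : numClosedFieldType) (gT : finGroupType)
    (G H : {group gT}) (d d' : nat)
    (U : gT -> 'M[C]_d) (U' : gT -> 'M[C]_d')
    (xi : 'cV[C]_d) (phi : 'cV[C]_d') :
  H \subset G ->
  proj_unitary_rep G U ->
  unit_vec xi ->
  (forall g, g \in G -> chi U xi g = (if g \in H then 1 else 0)) ->
  proj_unitary_rep G U' ->
  unit_vec phi ->
  H \subset SymG G U' phi ->
  forall M : nat, (0 < M)%N ->
  exists L : 'M[C]_d -> 'M[C]_(pdim d' M),
    [/\ CPTP L,
        covariant G U (fun g => tenspow M (U' g)) L
      & L (proj xi) = tenspow M (proj phi)].
Proof.
move=> sHG hU hxi hchi hU' hphi hsym M _.
exists (L G H U U' xi phi M); split.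
- split.
  + exact: L_lin.
  + by apply: L_CP.
  + by apply: L_TP.
- by apply: L_cov.
- by apply: L_xi.
Qed.
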